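(* Let $\mathcal{X}$ be any fuzzy random variable with values in $\mathcal{F}_c(\mathbb{R})$. Then $\mathrm{Med}_s(\mathcal{X})=\mathrm{Med}(\mathcal{X};D_{FT})$.
   Context: $\mathcal{F}_c(\mathbb{R})$ is the set of functions $A:\mathbb{R}\to[0,1]$ whose $\alpha$-levels $A_\alpha=\{x:A(x)\ge\alpha\}$ ($\alpha\in(0,1]$) and $A_0=\overline{\{x:A(x)>0\}}$ are non-empty compact intervals. Support function: $s_A(u,\alpha)=\sup\{uv:v\in A_\alpha\}$, $u\in\{-1,1\}$, $\alpha\in[0,1]$. A fuzzy random variable on $(\Omega,\mathcal{A},\mathbb{P})$ is a map $\mathcal{X}:\Omega\to\mathcal{F}_c(\mathbb{R})$ with each $\omega\mapsto\mathcal{X}(\omega)_\alpha$ a random compact set; $s_{\mathcal{X}}(u,\alpha)(\omega)=s_{\mathcal{X}(\omega)}(u,\alpha)$ is then a real random variable. For a real random variable $X$, $\mathrm{Med}(X)$ is the set of all its medians. $\mathrm{Med}_s(\mathcal{X})$ is the set of $A\in\mathcal{F}_c(\mathbb{R})$ with $s_A(u,\alpha)\in\mathrm{Med}(s_{\mathcal{X}}(u,\alpha))$ for all $u\in\{-1,1\}$, $\alpha\in[0,1]$. The fuzzy Tukey depth is $D_{FT}(A;\mathcal{X})=\inf_{u\in\{-1,1\},\alpha\in[0,1]}\min\big(\mathbb{P}[s_{\mathcal{X}}(u,\alpha)\le s_A(u,\alpha)],\ \mathbb{P}[s_{\mathcal{X}}(u,\alpha)\ge s_A(u,\alpha)]\big)$,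 and $\mathrm{Med}(\mathcal{X};D_{FT})=\{A\in\mathcal{F}_c(\mathbb{R}):D_{FT}(A;\mathcal{X})=\max_{U\in\mathcal{F}_c(\mathbb{R})}D_{FT}(U;\mathcal{X})\}$. *)

(* Defs.v *)
From HB Require Import structures.
From mathcomp Require Import all_boot all_order all_algebra.
From mathcomp Require Import all_classical all_reals all_analysis.
Set Implicit Arguments. Unset Strict Implicit. Unset Printing Implicit Defensive.
Import Order.TTheory GRing.Theory Num.Theory.
Import numFieldNormedType.Exports.
Local Open Scope classical_set_scope.
Local Open Scope ring_scope.

Section FuzzyDefs.
Context {R : realType}.

Definition alevel (A : R -> R) (a : R) : set R :=
  if 0 < a then [set x | a <= A x] else closure [set x | 0 < A x].

Definition isFc (A : R -> R) : Prop :=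
  (forall x, 0 <= A x <= 1) /\
  (forall a, 0 <= a <= 1 ->
     exists l r : R, l <= r /\ alevel A a = [set x | l <= x <= r]).

Definition suppf (A : R -> R) (u a : R) : R :=
  sup [set u * v | v in alevel A a].

Definition dirlev (u a : R) : Prop := (u = 1 \/ u = -1) /\ 0 <= a <= 1.

Context {d : measure_display} {Omega : measurableType d}.

(* Fuzzy random variable: values in F_c(R); each alpha-level is a random
   compact interval, i.e. its endpoints (equivalently s_X(1,.), s_X(-1,.))
   are real random variables. *)
Definition fuzzyRV (X : Omega -> R -> R) : Prop :=
  (forall w, isFc (X w)) /\
  (forall u a, dirlev u a -> measurable_fun setT (fun w => suppf (X w) u a)).

Variable P : probability Omega R.

Definition Med (Y : Omega -> R) : set R :=
  [set m | ((1/2)%:E <= P [set w | (Y w <= m)%R])%E /\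
          ((1/2)%:E <= P [set w | (m <= Y w)%R])%E].

Definition Med_s (X : Omega -> R -> R) : set (R -> R) :=
  [set A | isFc A /\
     forall u a, dirlev u a -> Med (fun w => suppf (X w) u a) (suppf A u a)].

Definition D_FT (A : R -> R) (X : Omega -> R -> R) : \bar R :=
  ereal_inf [set e | exists u a, dirlev u a /\
     e = Order.min (P [set w | suppf (X w) u a <= suppf A u a])
                   (P [set w | suppf (X w) u a >= suppf A u a])].

Definition Med_DFT (X : Omega -> R -> R) : set (R -> R) :=
  [set A | isFc A /\ forall U, isFc U -> (D_FT U X <= D_FT A X)%E].

End FuzzyDefs.

(* Main.v *)
Set Warnings "-notation-overridden,-ambiguous-paths,-notation-incompatible-prefix".
Require Import Defs.
From HB Require Import structures.
From mathcomp Require Import all_boot all_order all_algebra.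
From mathcomp Require Import all_classical all_reals all_analysis.
Import Order.TTheory GRing.Theory Num.Theory.
Import numFieldNormedType.Exports.
Local Open Scope classical_set_scope.
Local Open Scope ring_scope.
From mathcomp Require Import lra.
Section Prob.
Context {R : realType} {d : measure_display} {Omega : measurableType d}.
Variable P : probability Omega R.

Definition pr (E : set Omega) : R := fine (P E).

Lemma prE E : measurable E -> P E = (pr E)%:E.
Proof.
move=> mE; rewrite /pr fineK // ge0_fin_numE //.
exact: (le_lt_trans (probability_le1 P mE) (ltry 1)).
Qed.

Lemma pr_ge0 E : measurable E -> 0 <= pr E.
Proof. by move=> mE; rewrite -lee_fin -prE //; exact: measure_ge0. Qed.

Lemma pr_le1 E : measurable E -> pr E <= 1.
Proof. by move=> mE; rewrite -lee_fin -prE //; exact: probability_le1. Qed.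

Lemma pr_le E F : measurable E -> measurable F -> E `<=` F -> pr E <= pr F.
Proof.
move=> mE mF EF; rewrite -lee_fin -!prE //.
by apply: le_measure => //; rewrite inE.
Qed.

Lemma pr_setC E : measurable E -> pr (~` E) = 1 - pr E.
Proof.
move=> mE; have h := probability_setC P mE.
have mC : measurable (~` E) by exact: measurableC.
by apply/EFin_inj; rewrite -prE // EFinB -prE.
Qed.

Lemma pr_set0 : pr set0 = 0.
Proof. by rewrite /pr measure0. Qed.

Lemma pr_bigcap (F : nat -> set Omega) c : (forall n, measurable (F n)) ->
  (forall n m, (n <= m)%N -> F m `<=` F n) -> (forall n, c <= pr (F n)) ->
  c <= pr (\bigcap_n F n).
Proof.
move=> mF dF cF.
have mI : measurable (\bigcap_n F n) by apply: bigcapT_measurable.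
have h := @nonincreasing_cvg_mu _ _ _ P F _ mF mI _.
have /h h2 : (P (F 0%N) < +oo)%E by rewrite prE // ltry.
have /h2 hc : nonincreasing_seq F by move=> n m nm; apply/subsetPset; exact: dF.
rewrite -lee_fin -prE //; rewrite -(cvg_lim _ hc) //.
apply: lime_ge; first by apply/cvg_ex; eexists; exact: hc.
by apply: nearW => n /=; rewrite prE // lee_fin.
Qed.

Lemma meas_le (f : Omega -> R) c : measurable_fun setT f ->
  measurable [set w | f w <= c].
Proof.
move=> mf; rewrite [X in measurable X](_ : _ = setT `&` f @^-1` [set` `]-oo, c]]); first exact: mf measurableT _ (measurable_itv _).
by apply/seteqP; split => x /=; rewrite in_itv /= ?andbT; [move=> ->|case].
Qed.

Lemma meas_ge (f : Omega -> R) c : measurable_fun setT f ->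
  measurable [set w | c <= f w].
Proof.
move=> mf; rewrite [X in measurable X](_ : _ = setT `&` f @^-1` [set` `[c, +oo[]); first exact: mf measurableT _ (measurable_itv _).
by apply/seteqP; split => x /=; rewrite in_itv /= ?andbT; [move=> ->|case].
Qed.

Lemma meas_lt (f : Omega -> R) c : measurable_fun setT f ->
  measurable [set w | f w < c].
Proof.
move=> mf; rewrite [X in measurable X](_ : _ = setT `&` f @^-1` [set` `]-oo, c[]); first exact: mf measurableT _ (measurable_itv _).
by apply/seteqP; split => x /=; rewrite in_itv /= ?andbT; [move=> ->|case].
Qed.

Lemma meas_gt (f : Omega -> R) c : measurable_fun setT f ->
  measurable [set w | c < f w].
Proof.
move=> mf; rewrite [X in measurable X](_ : _ = setT `&` f @^-1` [set` `]c, +oo[]); first exact: mf measurableT _ (measurable_itv _).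
by apply/seteqP; split => x /=; rewrite in_itv /= ?andbT; [move=> ->|case].
Qed.

Lemma LLR (t0 hi c : R) (E : R -> set Omega) (F : set Omega) : t0 < hi ->
  (forall t, t0 < t < hi -> measurable (E t)) ->
  (forall s t, t0 < s -> s <= t -> t < hi -> E s `<=` E t) ->
  (forall t, t0 < t < hi -> c <= pr (E t)) ->
  measurable F -> (forall w, (forall t, t0 < t < hi -> E t w) -> F w) ->
  c <= pr F.
Proof.
move=> t0hi mE mono cE mF EF.
pose tn (n : nat) := t0 + (hi - t0) / (n.+2)%:R.
have tnP n : t0 < tn n < hi.
  have h0 : 0 < hi - t0 by rewrite subr_gt0.
  have hn : 1 < (n.+2)%:R :> R by rewrite ltr1n.
  apply/andP; split; first by rewrite /tn ltrDl divr_gt0 // ltr0n.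
  rewrite /tn -ltrBrDl ltr_pdivrMr ?ltr0n //.
  by rewrite ltr_pMr.
have tnM n m : (n <= m)%N -> tn m <= tn n.
  move=> nm; rewrite /tn lerD2l ler_pM2l ?subr_gt0 //.
  by rewrite lef_pV2 ?posrE ?ltr0n // ler_nat ltnS ltnS.
have mEn n : measurable (E (tn n)) by apply: mE; exact: tnP.
apply: (le_trans (@pr_bigcap (fun n => E (tn n)) c mEn _ _)).
- move=> n m nm; apply: mono; [by case/andP: (tnP m)|exact: tnM|by case/andP: (tnP n)].
- by move=> n; apply: cE; exact: tnP.
apply: pr_le => //; first exact: bigcapT_measurable.
move=> w Hw; apply: EF => t /andP[t0t thi].
have h0 : 0 <= (hi - t0) / (t - t0) by rewrite divr_ge0 // subr_ge0 ltW.
set n := Num.Def.archi_bound ((hi - t0) / (t - t0)).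
have := archi_boundP h0; rewrite -/n => hn.
apply: (mono (tn n)); [by case/andP: (tnP n)| |by []|exact: Hw].
rewrite /tn -lerBrDl ler_pdivrMr ?ltr0n //.
rewrite ltr_pdivrMr ?subr_gt0 // in hn.
apply: (le_trans (ltW hn)); rewrite mulrC ler_pM2l ?subr_gt0 //.
by rewrite ler_nat leqW.
Qed.

Lemma LLL (lo t0 c : R) (E : R -> set Omega) (F : set Omega) : lo < t0 ->
  (forall t, lo < t < t0 -> measurable (E t)) ->
  (forall s t, lo < s -> s <= t -> t < t0 -> E t `<=` E s) ->
  (forall t, lo < t < t0 -> c <= pr (E t)) ->
  measurable F -> (forall w, (forall t, lo < t < t0 -> E t w) -> F w) ->
  c <= pr F.
Proof.
move=> lot0 mE mono cE mF EF.
have negP t : (- t0 < t < - lo) = (lo < - t < t0).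
  by rewrite andbC ltrNl ltrNr.
apply: (@LLR (- t0) (- lo) c (fun t => E (- t))) => //.
- by rewrite ltrN2.
- by move=> t; rewrite negP => /mE.
- move=> s t t0s st tlo; apply: mono; [by rewrite ltrNr|by rewrite lerN2|by rewrite ltrNl].
- by move=> t; rewrite negP => /cE.
- move=> w H; apply: EF => t tP; rewrite -[t]opprK; apply: H.
  by rewrite negP opprK.
Qed.

Lemma le_from_right (y m hi : R) : m < hi ->
  (forall t, m < t < hi -> y <= t) -> y <= m.
Proof.
move=> mh H; rewrite leNgt; apply/negP => my.
case: (leP y hi) => yh.
- have h := H ((m + y) / 2).
  have : m < (m + y) / 2 < hi by apply/andP; split; lra.
  move/h; lra.
- have h := H ((m + hi) / 2).
  have : m < (m + hi) / 2 < hi by apply/andP; split; lra.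
  move/h; lra.
Qed.

Lemma ge_from_left (y m lo : R) : lo < m ->
  (forall t, lo < t < m -> t <= y) -> m <= y.
Proof.
move=> lm H; rewrite -lerN2; apply: (@le_from_right _ _ (- lo)); first by rewrite ltrN2.
move=> t /andP[h1 h2]; rewrite lerNl; apply: H; rewrite ltrNr h2 /= ltrNl //.
Qed.

Definition med (Y : Omega -> R) (m : R) :=
  1/2 <= pr [set w | Y w <= m] /\ 1/2 <= pr [set w | m <= Y w].

Lemma cdf_right (Y : Omega -> R) l c : measurable_fun setT Y ->
  (forall t, l < t -> c <= pr [set w | Y w <= t]) -> c <= pr [set w | Y w <= l].
Proof.
move=> mY H1.
apply: (@LLR l (l + 1) _ (fun t => [set w | Y w <= t])).
+ by rewrite ltrDl.
+ by move=> t _; exact: meas_le.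
+ by move=> s t _ st _ w /= h; apply: le_trans st.
+ by move=> t /andP[+ _]; exact: H1.
+ exact: meas_le.
+ by move=> w H; apply: (@le_from_right _ _ (l + 1)); [rewrite ltrDl|].
Qed.

Lemma ccdf_left (Y : Omega -> R) l c : measurable_fun setT Y ->
  (forall t, t < l -> c <= pr [set w | t <= Y w]) -> c <= pr [set w | l <= Y w].
Proof.
move=> mY H2.
apply: (@LLL (l - 1) l _ (fun t => [set w | t <= Y w])).
+ by rewrite gtrBl.
+ by move=> t _; exact: meas_ge.
+ by move=> s t _ st _ w /= h; apply: le_trans h.
+ by move=> t /andP[_]; exact: H2.
+ exact: meas_ge.
+ by move=> w H; apply: (@ge_from_left _ _ (l - 1)); [rewrite gtrBl|].
Qed.

Lemma med_lim (Y : Omega -> R) m : measurable_fun setT Y ->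
  (forall t, m < t -> 1/2 <= pr [set w | Y w <= t]) ->
  (forall t, t < m -> 1/2 <= pr [set w | t <= Y w]) -> med Y m.
Proof.
move=> mY H1 H2; split.
- apply: (@LLR m (m + 1) _ (fun t => [set w | Y w <= t])).
  + by rewrite ltrDl.
  + by move=> t _; exact: meas_le.
  + by move=> s t _ st _ w /= h; apply: le_trans st.
  + by move=> t /andP[+ _]; exact: H1.
  + exact: meas_le.
  + by move=> w H; apply: (@le_from_right _ _ (m + 1)); [rewrite ltrDl|].
- apply: (@LLL (m - 1) m _ (fun t => [set w | t <= Y w])).
  + by rewrite gtrBl.
  + by move=> t _; exact: meas_ge.
  + by move=> s t _ st _ w /= h; apply: le_trans h.
  + by move=> t /andP[_]; exact: H2.
  + exact: meas_ge.
  + by move=> w H; apply: (@ge_from_left _ _ (m - 1)); [rewrite gtrBl|].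
Qed.

Lemma pr_lt_ge (Y : Omega -> R) b : measurable_fun setT Y ->
  pr [set w | Y w < b] = 1 - pr [set w | b <= Y w].
Proof.
move=> mY; rewrite -pr_setC; last exact: meas_ge.
by congr pr; apply/seteqP; split => w /=; rewrite ltNge => /negP.
Qed.

Lemma pr_gt_le (Y : Omega -> R) b : measurable_fun setT Y ->
  pr [set w | b < Y w] = 1 - pr [set w | Y w <= b].
Proof.
move=> mY; rewrite -pr_setC; last exact: meas_le.
by congr pr; apply/seteqP; split => w /=; rewrite ltNge => /negP.
Qed.

Lemma low_bound (Y : Omega -> R) : measurable_fun setT Y ->
  exists b, pr [set w | Y w <= b] < 1/2.
Proof.
move=> mY; apply/not_existsP => H.
have H' b : 1/2 <= pr [set w | Y w <= b] by rewrite leNgt; apply/negP => /(H b).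
have := @pr_bigcap (fun n : nat => [set w | Y w <= - n%:R]) (1/2) (fun n => meas_le _ _ mY) _ (fun n => H' _).
have -> : \bigcap_n [set w | Y w <= - n%:R] = set0.
  apply/seteqP; split => // w /= Hw.
  have := Hw (Num.Def.archi_bound `|Y w|) I.
  have := archi_boundP (normr_ge0 (Y w)); rewrite ltr_norml => /andP[h _] h2.
  have : Y w < Y w by exact: (le_lt_trans h2 h).
  by rewrite ltxx.
rewrite pr_set0.
have : (forall n m : nat, (n <= m)%N -> [set w | Y w <= - m%:R] `<=` [set w | Y w <= - n%:R]).
  by move=> n m nm w /= h; apply: (le_trans h); rewrite lerN2 ler_nat.
move=> h1 /(_ h1); rewrite leNgt => /negP; apply; rewrite divr_gt0 //.
Qed.
Lemma high_bound (Y : Omega -> R) : measurable_fun setT Y ->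
  exists b, pr [set w | b <= Y w] < 1/2.
Proof.
move=> mY; apply/not_existsP => H.
have H' b : 1/2 <= pr [set w | b <= Y w] by rewrite leNgt; apply/negP => /(H b).
have := @pr_bigcap (fun n : nat => [set w | n%:R <= Y w]) (1/2) (fun n => meas_ge _ _ mY) _ (fun n => H' _).
have -> : \bigcap_n [set w | n%:R <= Y w] = set0.
  apply/seteqP; split => // w /= Hw.
  have := Hw (Num.Def.archi_bound `|Y w|) I.
  have := archi_boundP (normr_ge0 (Y w)); rewrite ltr_norml => /andP[_ h] h2.
  have : Y w < Y w by apply: (lt_le_trans h h2).
  by rewrite ltxx.
rewrite pr_set0.
have : (forall n m : nat, (n <= m)%N -> [set w | m%:R <= Y w] `<=` [set w | n%:R <= Y w]).
  by move=> n m nm w /= h; apply: le_trans h; rewrite ler_nat.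
move=> h1 /(_ h1); rewrite leNgt => /negP; apply; rewrite divr_gt0 //.
Qed.

Lemma med_exists (Y : Omega -> R) : measurable_fun setT Y -> exists m, med Y m.
Proof.
move=> mY.
pose Z := [set x | 1/2 <= pr [set w | Y w <= x]].
have [b Hb] := low_bound Y mY.
have [b' Hb'] := high_bound Y mY.
have Zb x : Z x -> b <= x.
  move=> Zx; rewrite leNgt; apply/negP => xb.
  have : pr [set w | Y w <= x] <= pr [set w | Y w <= b].
    apply: pr_le; [exact: meas_le|exact: meas_le|].
    by move=> w /= h; apply: (le_trans h); rewrite ltW.
  rewrite /Z /= in Zx; lra.
have Zne : Z !=set0.
  exists b'; rewrite /Z /=.
  have : pr [set w | Y w < b'] <= pr [set w | Y w <= b'].
    apply: pr_le; [exact: meas_lt|exact: meas_le|].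
    by move=> w /= h; rewrite ltW.
  rewrite pr_lt_ge //; lra.
have lbZ : has_lbound Z by exists b => x; exact: Zb.
exists (inf Z); apply: med_lim => // t.
- move=> /(inf_lt Zne) [y Zy yt]; apply: (le_trans Zy).
  apply: pr_le; [exact: meas_le|exact: meas_le|].
  by move=> w /= h; apply: (le_trans h); rewrite ltW.
- move=> tm.
  have nZt : ~ Z t by move=> Zt; have := ge_inf lbZ Zt; rewrite leNgt tm.
  have : pr [set w | t < Y w] <= pr [set w | t <= Y w].
    apply: pr_le; [exact: meas_gt|exact: meas_ge|].
    by move=> w /= h; rewrite ltW.
  rewrite pr_gt_le //; rewrite /Z /= in nZt; move/negP: nZt; rewrite -ltNge; lra.
Qed.
End Prob.


Section Fuzzy.
Context {R : realType}.
Implicit Types (A : R -> R) (a b x : R).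

Lemma sup_eq_max (S : set R) r : S r -> ubound S r -> sup S = r.
Proof.
move=> Sr ubr; apply/le_anti/andP; split; first by apply: ge_sup => //; exists r.
by apply: ub_le_sup => //; exists r.
Qed.

Lemma suppf_itv A a l r : alevel A a = [set x | l <= x <= r] -> l <= r ->
  suppf A 1 a = r /\ suppf A (-1) a = - l.
Proof.
move=> H lr; rewrite /suppf H; split.
- apply: sup_eq_max; first by exists r; rewrite /= ?mul1r ?lexx ?lr.
  by move=> y [v /andP[_ vr] <-]; rewrite mul1r.
- apply: sup_eq_max; first by exists l; rewrite /= ?mulN1r ?lexx ?lr.
  by move=> y [v /andP[lv _] <-]; rewrite mulN1r lerN2.
Qed.

Definition lA A a := - suppf A (-1) a.
Definition rA A a := suppf A 1 a.

Lemma Fc_lev A a : isFc A -> 0 <= a <= 1 ->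
  alevel A a = [set x | lA A a <= x <= rA A a] /\ lA A a <= rA A a.
Proof.
move=> hA ha; have [l [r [lr H]]] := hA.2 a ha.
have [h1 h2] := suppf_itv _ _ _ _ H lr.
by rewrite /lA /rA h1 h2 opprK.
Qed.

Lemma Fc_mem A a x : isFc A -> 0 <= a <= 1 ->
  alevel A a x <-> lA A a <= x <= rA A a.
Proof. by move=> hA ha; have [-> _] := Fc_lev _ _ hA ha. Qed.

Lemma alevel_mono A a b : 0 <= a -> a <= b -> alevel A b `<=` alevel A a.
Proof.
move=> a0 ab; rewrite /alevel.
case: (ltP 0 a) => a0'.
  by rewrite (lt_le_trans a0' ab) => x /= h; apply: le_trans h.
case: (ltP 0 b) => b0 // x /= h; apply: subset_closure => /=.
exact: lt_le_trans b0 h.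
Qed.

Lemma lA_mono A a b : isFc A -> 0 <= a -> a <= b -> b <= 1 -> lA A a <= lA A b.
Proof.
move=> hA a0 ab b1.
have hb : 0 <= b <= 1 by rewrite b1 (le_trans a0 ab).
have ha : 0 <= a <= 1 by rewrite a0 (le_trans ab b1).
have [_ lrb] := Fc_lev _ _ hA hb.
have : alevel A a (lA A b) by apply: (@alevel_mono A a b a0 ab); apply/(Fc_mem _ _ _ hA hb); rewrite lexx lrb.
by move/(Fc_mem _ _ _ hA ha) => /andP[].
Qed.

Lemma rA_mono A a b : isFc A -> 0 <= a -> a <= b -> b <= 1 -> rA A b <= rA A a.
Proof.
move=> hA a0 ab b1.
have hb : 0 <= b <= 1 by rewrite b1 (le_trans a0 ab).
have ha : 0 <= a <= 1 by rewrite a0 (le_trans ab b1).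
have [_ lrb] := Fc_lev _ _ hA hb.
have : alevel A a (rA A b) by apply: (@alevel_mono A a b a0 ab); apply/(Fc_mem _ _ _ hA hb); rewrite lexx lrb.
by move/(Fc_mem _ _ _ hA ha) => /andP[].
Qed.

Lemma alevel_pos A a : 0 < a -> alevel A a = [set x | a <= A x].
Proof. by move=> a0; rewrite /alevel a0. Qed.

Lemma alevel_left A a x : isFc A -> 0 < a <= 1 ->
  (forall b, 0 < b < a -> alevel A b x) -> alevel A a x.
Proof.
move=> hA /andP[a0 a1] H; rewrite alevel_pos //=.
apply: (@ge_from_left _ _ _ 0) => // b /andP[b0 ba].
by have := H b; rewrite b0 ba alevel_pos // => /(_ isT).
Qed.

Lemma lA_left A a x : isFc A -> 0 < a <= 1 ->
  (forall b, 0 < b < a -> lA A b <= x) -> lA A a <= x.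
Proof.
move=> hA ha H; have /andP[a0 a1] := ha.
have ha' : 0 <= a <= 1 by rewrite ltW.
have [_ lr] := Fc_lev _ _ hA ha'.
case: (leP x (rA A a)) => xr; last by apply: le_trans lr (ltW xr).
suff : alevel A a x by move/(Fc_mem _ _ _ hA ha') => /andP[].
apply: alevel_left => // b /andP[b0 ba].
have hb : 0 <= b <= 1 by rewrite ltW //= (le_trans (ltW ba) a1).
apply/(Fc_mem _ _ _ hA hb); rewrite H ?b0 ?ba //=.
apply: (le_trans xr); apply: rA_mono => //; [exact: ltW|exact: ltW].
Qed.

Lemma rA_left A a x : isFc A -> 0 < a <= 1 ->
  (forall b, 0 < b < a -> x <= rA A b) -> x <= rA A a.
Proof.
move=> hA ha H; have /andP[a0 a1] := ha.
have ha' : 0 <= a <= 1 by rewrite ltW.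
have [_ lr] := Fc_lev _ _ hA ha'.
case: (leP (lA A a) x) => xl; last by apply: le_trans (ltW xl) lr.
suff : alevel A a x by move/(Fc_mem _ _ _ hA ha') => /andP[].
apply: alevel_left => // b /andP[b0 ba].
have hb : 0 <= b <= 1 by rewrite ltW //= (le_trans (ltW ba) a1).
apply/(Fc_mem _ _ _ hA hb); rewrite H ?b0 ?ba // andbT.
apply: le_trans xl; apply: lA_mono => //; [exact: ltW|exact: ltW].
Qed.

Lemma closure_near (S : set R) y m : closure S y -> y < m ->
  exists2 z, S z & z < m.
Proof.
move=> /(_ (ball y (m - y)) (nbhsx_ballx _ _ _)).
rewrite subr_gt0 => /[apply] -[z [Sz]].
rewrite -ball_normE /ball_ /= => h; exists z => //.
have := ler_norm (y - z); rewrite distrC in h *.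
move: h; rewrite ltr_norml => /andP[_ h] _; move: h; rewrite ltrBlDr subrK //.
Qed.

End Fuzzy.


Lemma closure_near' {R : realType} (S : set R) y m : closure S y -> m < y ->
  exists2 z, S z & m < z.
Proof.
move=> /(_ (ball y (y - m)) (nbhsx_ballx _ _ _)).
rewrite subr_gt0 => /[apply] -[z [Sz]].
rewrite -ball_normE /ball_ /= => h; exists z => //.
move: h; rewrite ltr_norml => /andP[_ h]; lra.
Qed.

Section Constr.
Context {R : realType} {d : measure_display} {Omega : measurableType d}.
Context (P : probability Omega R) (X : Omega -> R -> R) (hX : fuzzyRV X).

Definition Lo a w := lA (X w) a.
Definition Hi a w := rA (X w) a.

Lemma mLo a : 0 <= a <= 1 -> measurable_fun setT (Lo a).
Proof. by move=> ha; apply: measurable_realfun.measurable_funN; apply: hX.2; split => //; right. Qed.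

Lemma mHi a : 0 <= a <= 1 -> measurable_fun setT (Hi a).
Proof. by move=> ha; apply: hX.2; split => //; left. Qed.

Lemma LoHi a w : 0 <= a <= 1 -> Lo a w <= Hi a w.
Proof. by move=> ha; have [] := Fc_lev _ _ (hX.1 w) ha. Qed.

Lemma Lo_mono a b w : 0 <= a -> a <= b -> b <= 1 -> Lo a w <= Lo b w.
Proof. by move=> *; apply: lA_mono => //; exact: hX.1. Qed.

Lemma Hi_mono a b w : 0 <= a -> a <= b -> b <= 1 -> Hi b w <= Hi a w.
Proof. by move=> *; apply: rA_mono => //; exact: hX.1. Qed.

Lemma Lo_zero w m : Lo 0 w < m -> exists a, 0 < a < 1 /\ Lo a w < m.
Proof.
move=> lm.
have h01 : 0 <= (0:R) <= 1 by apply/andP; split; lra.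
have : alevel (X w) 0 (Lo 0 w).
  by apply/(Fc_mem _ _ _ (hX.1 w) h01); rewrite lexx LoHi.
rewrite /alevel ltxx => /closure_near /(_ lm) [z /= zpos zm].
have /andP[_ z1] := (hX.1 w).1 z.
exists (X w z / 2); split; first by apply/andP; split; lra.
have ha : 0 <= X w z / 2 <= 1 by apply/andP; split; lra.
have : alevel (X w) (X w z / 2) z by rewrite alevel_pos /=; lra.
move/(Fc_mem _ _ _ (hX.1 w) ha) => /andP[h _].
by apply: le_lt_trans h zm.
Qed.

Lemma Hi_zero w m : m < Hi 0 w -> exists a, 0 < a < 1 /\ m < Hi a w.
Proof.
move=> lm.
have h01 : 0 <= (0:R) <= 1 by apply/andP; split; lra.
have : alevel (X w) 0 (Hi 0 w).
  by apply/(Fc_mem _ _ _ (hX.1 w) h01); rewrite lexx LoHi.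
rewrite /alevel ltxx => /closure_near' /(_ lm) [z /= zpos zm].
have /andP[_ z1] := (hX.1 w).1 z.
exists (X w z / 2); split; first by apply/andP; split; lra.
have ha : 0 <= X w z / 2 <= 1 by apply/andP; split; lra.
have : alevel (X w) (X w z / 2) z by rewrite alevel_pos /=; lra.
move/(Fc_mem _ _ _ (hX.1 w) ha) => /andP[_ h].
by apply: lt_le_trans h.
Qed.

Definition G a x := 1/2 <= pr P [set w | Lo a w <= x] /\ 1/2 <= pr P [set w | x <= Hi a w].

Lemma G_mono a b x : 0 <= b -> b <= a -> a <= 1 -> G a x -> G b x.
Proof.
move=> b0 ba a1 [h1 h2].
have ha : 0 <= a <= 1 by rewrite a1 (le_trans b0 ba).
have hb : 0 <= b <= 1 by rewrite b0 (le_trans ba a1).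
split.
- apply: (le_trans h1); apply: pr_le; [exact: meas_le _ _ (mLo _ ha)|exact: meas_le _ _ (mLo _ hb)|].
  by move=> w /= h; apply: le_trans h; apply: Lo_mono.
- apply: (le_trans h2); apply: pr_le; [exact: meas_ge _ _ (mHi _ ha)|exact: meas_ge _ _ (mHi _ hb)|].
  by move=> w /= h; apply: (le_trans h); apply: Hi_mono.
Qed.

Lemma G_conv a x y z : 0 <= a <= 1 -> G a y -> G a z -> y <= x -> x <= z -> G a x.
Proof.
move=> ha [h1 _] [_ h2] yx xz; split.
- apply: (le_trans h1); apply: pr_le; [exact: meas_le _ _ (mLo _ ha)|exact: meas_le _ _ (mLo _ ha)|].
  by move=> w /= h; apply: le_trans yx.
- apply: (le_trans h2); apply: pr_le; [exact: meas_ge _ _ (mHi _ ha)|exact: meas_ge _ _ (mHi _ ha)|].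
  by move=> w /= h; apply: le_trans h.
Qed.

Lemma G_left a x : 0 < a <= 1 -> (forall b, 0 < b < a -> G b x) -> G a x.
Proof.
move=> ha H; have /andP[a0 a1] := ha.
have ha' : 0 <= a <= 1 by rewrite ltW.
have hb b : 0 < b < a -> 0 <= b <= 1.
  by move=> /andP[b0 ba]; rewrite ltW //= (le_trans (ltW ba) a1).
split.
- apply: (@LLL _ _ _ P 0 a _ (fun b => [set w | Lo b w <= x])) => //.
  + by move=> t /hb ht; exact: meas_le _ _ (mLo _ ht).
  + move=> s t s0 st ta w /= h; apply: le_trans h; apply: Lo_mono => //; first exact: ltW.
    by rewrite (le_trans (ltW ta) a1).
  + by move=> t ht; have [] := H t ht.
  + exact: meas_le _ _ (mLo _ ha').
  + by move=> w Hw; apply: (lA_left _ _ _ (hX.1 w) ha) => b /Hw.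
- apply: (@LLL _ _ _ P 0 a _ (fun b => [set w | x <= Hi b w])) => //.
  + by move=> t /hb ht; exact: meas_ge _ _ (mHi _ ht).
  + move=> s t s0 st ta w /= h; apply: (le_trans h); apply: Hi_mono => //; first exact: ltW.
    by rewrite (le_trans (ltW ta) a1).
  + by move=> t ht; have [] := H t ht.
  + exact: meas_ge _ _ (mHi _ ha').
  + by move=> w Hw; apply: (rA_left _ _ _ (hX.1 w) ha) => b /Hw.
Qed.

Lemma G_ne a : 0 <= a <= 1 -> exists x, G a x.
Proof.
move=> ha; have [m [h1 h2]] := med_exists P _ (mLo _ ha).
exists m; split => //; apply: (le_trans h2); apply: pr_le.
- exact: meas_ge _ _ (mLo _ ha).
- exact: meas_ge _ _ (mHi _ ha).
- by move=> w /= h; apply: (le_trans h); apply: LoHi.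
Qed.

Lemma G_bnd : exists b0 b1, forall a x, 0 <= a <= 1 -> G a x -> b0 <= x /\ x <= b1.
Proof.
have h01 : 0 <= (0:R) <= 1 by apply/andP; split; lra.
have [b0 Hb0] := low_bound P _ (mLo _ h01).
have [b1 Hb1] := high_bound P _ (mHi _ h01).
exists b0, b1 => a x ha [g1 g2]; have /andP[a0 a1] := ha; split.
- rewrite leNgt; apply/negP => xb.
  have : pr P [set w | Lo a w <= x] <= pr P [set w | Lo 0 w <= b0].
    apply: pr_le; [exact: meas_le _ _ (mLo _ ha)|exact: meas_le _ _ (mLo _ h01)|].
    move=> w /= h; apply: le_trans (ltW xb); apply: le_trans h; exact: Lo_mono.
  lra.
- rewrite leNgt; apply/negP => xb.
  have : pr P [set w | x <= Hi a w] <= pr P [set w | b1 <= Hi 0 w].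
    apply: pr_le; [exact: meas_ge _ _ (mHi _ ha)|exact: meas_ge _ _ (mHi _ h01)|].
    move=> w /= h; apply: le_trans (ltW xb) _; apply: (le_trans h); exact: Hi_mono.
  lra.
Qed.


Definition Aset x := [set a : R | a = 0 \/ (0 < a <= 1 /\ G a x)].
Definition Afun x := sup (Aset x).

Lemma Aset_ne x : Aset x !=set0.
Proof. by exists 0; left. Qed.

Lemma Aset_ub x : ubound (Aset x) 1.
Proof. by move=> a [->|[/andP[_ a1] _]] //; exact: ler01. Qed.

Lemma Aset_has x : has_ubound (Aset x).
Proof. by exists 1; exact: Aset_ub. Qed.

Lemma Afun01 x : 0 <= Afun x <= 1.
Proof.
apply/andP; split; first by apply: ub_le_sup; [exact: Aset_has|left].
by apply: ge_sup; [exact: Aset_ne|exact: Aset_ub].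
Qed.

Lemma K1 a x : 0 < a <= 1 -> (a <= Afun x <-> G a x).
Proof.
move=> ha; split; last first.
  by move=> Gx; apply: ub_le_sup; [exact: Aset_has|right].
move=> aA; apply: G_left => // b /andP[b0 ba].
have : b < Afun x by apply: lt_le_trans aA.
move=> /(sup_gt (Aset_ne x)) [a' [a'0|[/andP[a'0 a'1] Ga']] ba'].
  by move: ba'; rewrite a'0 ltNge ltW.
by apply: (G_mono _ _ _ (ltW b0) (ltW ba') a'1 Ga').
Qed.

Lemma Apos x : 0 < Afun x <-> exists a, 0 < a <= 1 /\ G a x.
Proof.
split.
  move=> A0; exists (Afun x); have /andP[_ A1] := Afun01 x.
  by split; [rewrite A0 A1|apply/K1; rewrite ?A0 ?A1].
move=> [a [ha Ga]]; have /andP[a0 _] := ha.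
by apply: lt_le_trans a0 _; apply/K1.
Qed.


Lemma lev_pos a : 0 < a <= 1 -> exists l r, l <= r /\
  alevel Afun a = [set x | l <= x <= r] /\ med P (Lo a) l /\ med P (Hi a) r.
Proof.
move=> ha; have /andP[a0 a1] := ha.
have ha' : 0 <= a <= 1 by rewrite ltW.
pose Ga := [set x | G a x].
have [x0 G0] := G_ne _ ha'.
have [b0 [b1 Hb]] := G_bnd.
have Gne : Ga !=set0 by exists x0.
have hlb : has_lbound Ga by exists b0 => x /(Hb _ _ ha') [].
have hub : has_ubound Ga by exists b1 => x /(Hb _ _ ha') [].
pose l := inf Ga; pose r := sup Ga.
have lx0 : l <= x0 by apply: ge_inf.
have x0r : x0 <= r by apply: ub_le_sup.
have Gl : G a l.
  split.
  - apply: (cdf_right P _ _ _ (mLo _ ha')) => t /(inf_lt Gne) [y Gy yt].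
    apply: (le_trans Gy.1); apply: pr_le; [exact: meas_le _ _ (mLo _ ha')|exact: meas_le _ _ (mLo _ ha')|].
    by move=> w /= h; apply: (le_trans h); rewrite ltW.
  - apply: (le_trans G0.2); apply: pr_le; [exact: meas_ge _ _ (mHi _ ha')|exact: meas_ge _ _ (mHi _ ha')|].
    by move=> w /= h; apply: le_trans h.
have Gr : G a r.
  split.
  - apply: (le_trans G0.1); apply: pr_le; [exact: meas_le _ _ (mLo _ ha')|exact: meas_le _ _ (mLo _ ha')|].
    by move=> w /= h; apply: (le_trans h).
  - apply: (ccdf_left P _ _ _ (mHi _ ha')) => t /(sup_gt Gne) [y Gy yt].
    apply: (le_trans Gy.2); apply: pr_le; [exact: meas_ge _ _ (mHi _ ha')|exact: meas_ge _ _ (mHi _ ha')|].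
    by move=> w /= h; apply: le_trans h; rewrite ltW.
exists l, r; split; first exact: le_trans lx0 x0r.
split.
  rewrite alevel_pos //; apply/seteqP; split => x /=.
  - move/(K1 _ _ ha) => Gx; apply/andP; split; [exact: ge_inf|exact: ub_le_sup].
  - by move=> /andP[lx xr]; apply/(K1 _ _ ha); exact: (G_conv _ _ _ _ ha' Gl Gr lx xr).
split.
- split; first exact: Gl.1.
  apply: (ccdf_left P _ _ _ (mLo _ ha')) => t tl.
  have nG : ~ G a t by move=> Gt; have := ge_inf hlb Gt; rewrite leNgt tl.
  have h2 : 1/2 <= pr P [set w | t <= Hi a w].
    apply: (le_trans Gl.2); apply: pr_le; [exact: meas_ge _ _ (mHi _ ha')|exact: meas_ge _ _ (mHi _ ha')|].
    by move=> w /= h; apply: le_trans h; rewrite ltW.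
  have h1 : pr P [set w | Lo a w <= t] < 1/2 by rewrite ltNge; apply/negP => h1; exact: nG.
  have : pr P [set w | t < Lo a w] <= pr P [set w | t <= Lo a w].
    apply: pr_le; [exact: meas_gt _ _ (mLo _ ha')|exact: meas_ge _ _ (mLo _ ha')|].
    by move=> w /= h; rewrite ltW.
  rewrite pr_gt_le; [lra|exact: mLo].
- split; last exact: Gr.2.
  apply: (cdf_right P _ _ _ (mHi _ ha')) => t rt.
  have nG : ~ G a t by move=> Gt; have := ub_le_sup hub Gt; rewrite leNgt rt.
  have h2 : 1/2 <= pr P [set w | Lo a w <= t].
    apply: (le_trans Gr.1); apply: pr_le; [exact: meas_le _ _ (mLo _ ha')|exact: meas_le _ _ (mLo _ ha')|].
    by move=> w /= h; apply: (le_trans h); rewrite ltW.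
  have h1 : pr P [set w | t <= Hi a w] < 1/2 by rewrite ltNge; apply/negP => h1; exact: nG.
  have : pr P [set w | Hi a w < t] <= pr P [set w | Hi a w <= t].
    apply: pr_le; [exact: meas_lt _ _ (mHi _ ha')|exact: meas_le _ _ (mHi _ ha')|].
    by move=> w /= h; rewrite ltW.
  rewrite pr_lt_ge; [lra|exact: mHi].
Qed.


Lemma lev_zero : exists l r, l <= r /\
  alevel Afun 0 = [set x | l <= x <= r] /\ med P (Lo 0) l /\ med P (Hi 0) r.
Proof.
have h0 : 0 <= (0:R) <= 1 by apply/andP; split; lra.
have h1' : 0 <= (1:R) <= 1 by apply/andP; split; lra.
have h1 : 0 < (1:R) <= 1 by apply/andP; split; lra.
pose U := [set x | exists a, 0 < a <= 1 /\ G a x].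
have Ua a x : 0 < a <= 1 -> G a x -> U x by move=> ha Gx; exists a.
have [x0 G0] := G_ne _ h1'.
have Une : U !=set0 by exists x0; exists 1.
have [b0 [b1 Hb]] := G_bnd.
have Ub x : U x -> b0 <= x /\ x <= b1.
  by move=> [a [/andP[a0 a1] Ga]]; apply: (Hb a) => //; rewrite ltW.
have hlb : has_lbound U by exists b0 => x /Ub [].
have hub : has_ubound U by exists b1 => x /Ub [].
have hi : has_inf U by split.
have hs : has_sup U by split.
pose l := inf U; pose r := sup U.
have lU x : U x -> l <= x by move=> Ux; exact: ge_inf.
have Ur x : U x -> x <= r by move=> Ux; exact: ub_le_sup.
have lr : l <= r.
  by have [x Ux] := Une; apply: le_trans (lU _ Ux) (Ur _ Ux).
have hU (a : R) : 0 < a <= 1 -> 0 <= a <= 1 by move=> /andP[a0 a1]; rewrite ltW.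
exists l, r; split => //.
split.
  rewrite /alevel ltxx.
  have -> : [set x | 0 < Afun x] = U by apply/seteqP; split => x /Apos.
  apply/seteqP; split => x /=.
  - move=> cx; have : closure [set` `[l, r]] x.
      apply: closureS cx => y Uy; rewrite /= in_itv /=.
      by apply/andP; split; [apply: lU|apply: Ur].
    by move/itv_closed; rewrite set_itvcc.
  - move=> /andP[lx xr] B /nbhs_ballP [e /= e0 eB].
    have [y Uy ye] := inf_adherent e0 hi.
    have [z Uz ze] := sup_adherent e0 hs.
    have ball_ok v : `|x - v| < e -> B v.
      by move=> hv; apply: eB; rewrite -ball_normE /ball_ /=.
    case: (leP x y) => xy.
      exists y; split => //; apply: ball_ok.
      have ly := lU _ Uy; rewrite ltr_norml; apply/andP; split; rewrite -/l in ye; lra.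
    case: (leP z x) => zx.
      exists z; split => //; apply: ball_ok.
      have zr := Ur _ Uz; rewrite ltr_norml; apply/andP; split; rewrite -/r in ze; lra.
    exists x; split; last by apply: ball_ok; rewrite subrr normr0.
    move: Uy Uz => [a [ha Gay]] [b [hb Gbz]].
    have /andP[a0 a1] := ha; have /andP[b0' b1'] := hb.
    case: (leP a b) => ab.
    + have Gaz := G_mono _ _ _ (ltW a0) ab b1' Gbz.
      by exists a; split => //; exact: (G_conv _ _ _ _ (hU _ ha) Gay Gaz (ltW xy) (ltW zx)).
    + have Gby := G_mono _ _ _ (ltW b0') (ltW ab) a1 Gay.
      by exists b; split => //; exact: (G_conv _ _ _ _ (hU _ hb) Gby Gbz (ltW xy) (ltW zx)).
split.
- split.
  + apply: (cdf_right P _ _ _ (mLo _ h0)) => t /(inf_lt Une) [y [a [ha Gy]] yt].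
    have /andP[a0 a1] := ha.
    apply: (le_trans Gy.1); apply: pr_le; [exact: meas_le _ _ (mLo _ (hU _ ha))|exact: meas_le _ _ (mLo _ h0)|].
    move=> w /= h; apply: le_trans (ltW yt); apply: le_trans h; apply: Lo_mono => //; exact: ltW.
  + apply: (ccdf_left P _ _ _ (mLo _ h0)) => m ml.
    apply: (LLR P 0 1 (1/2) (fun a => [set w | m < Lo a w])).
    * exact: ltr01.
    * by move=> t /andP[t0 t1]; apply: meas_gt; apply: mLo; rewrite ltW // ltW.
    * move=> s t s0 st t1 w /= h; apply: lt_le_trans h _; apply: Lo_mono => //; [exact: ltW|exact: ltW].
    * move=> t /andP[t0 t1].
      have ht : 0 < t <= 1 by rewrite t0 ltW.
      have ht' := hU _ ht.
      have nG : ~ G t m by move=> Gm; have := lU _ (Ua _ _ ht Gm); rewrite leNgt ml.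
      have [y Gy] := G_ne _ ht'.
      have ly := lU _ (Ua _ _ ht Gy).
      have h2 : 1/2 <= pr P [set w | m <= Hi t w].
        apply: (le_trans Gy.2); apply: pr_le; [exact: meas_ge _ _ (mHi _ ht')|exact: meas_ge _ _ (mHi _ ht')|].
        by move=> w /= h; apply: le_trans h; apply: ltW; apply: lt_le_trans ml ly.
      have h3 : pr P [set w | Lo t w <= m] < 1/2.
        by rewrite ltNge; apply/negP => h3; exact: nG.
      rewrite pr_gt_le; [lra|exact: mLo].
    * exact: meas_ge _ _ (mLo _ h0).
    * move=> w Hw /=; rewrite leNgt; apply/negP => /Lo_zero [a [ha hw]].
      by have := lt_trans (Hw a ha) hw; rewrite ltxx.
- split.
  + apply: (cdf_right P _ _ _ (mHi _ h0)) => m rm.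
    apply: (LLR P 0 1 (1/2) (fun a => [set w | Hi a w < m])).
    * exact: ltr01.
    * by move=> t /andP[t0 t1]; apply: meas_lt; apply: mHi; rewrite ltW // ltW.
    * move=> s t s0 st t1 w /= h; apply: le_lt_trans h; apply: Hi_mono => //; [exact: ltW|exact: ltW].
    * move=> t /andP[t0 t1].
      have ht : 0 < t <= 1 by rewrite t0 ltW.
      have ht' := hU _ ht.
      have nG : ~ G t m by move=> Gm; have := Ur _ (Ua _ _ ht Gm); rewrite leNgt rm.
      have [y Gy] := G_ne _ ht'.
      have yr := Ur _ (Ua _ _ ht Gy).
      have h2 : 1/2 <= pr P [set w | Lo t w <= m].
        apply: (le_trans Gy.1); apply: pr_le; [exact: meas_le _ _ (mLo _ ht')|exact: meas_le _ _ (mLo _ ht')|].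
        by move=> w /= h; apply: (le_trans h); apply: ltW; apply: le_lt_trans yr rm.
      have h3 : pr P [set w | m <= Hi t w] < 1/2.
        by rewrite ltNge; apply/negP => h3; exact: nG.
      rewrite pr_lt_ge; [lra|exact: mHi].
    * exact: meas_le _ _ (mHi _ h0).
    * move=> w Hw /=; rewrite leNgt; apply/negP => /Hi_zero [a [ha hw]].
      by have := lt_trans (Hw a ha) hw; rewrite ltxx.
  + apply: (ccdf_left P _ _ _ (mHi _ h0)) => t /(sup_gt Une) [y [a [ha Gy]] ty].
    have /andP[a0 a1] := ha.
    apply: (le_trans Gy.2); apply: pr_le; [exact: meas_ge _ _ (mHi _ (hU _ ha))|exact: meas_ge _ _ (mHi _ h0)|].
    move=> w /= h; apply: le_trans (ltW ty) _; apply: (le_trans h); apply: Hi_mono => //; exact: ltW.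
Qed.

End Constr.


Section Main.
Context {R : realType} {d : measure_display} {Omega : measurableType d}.
Context (P : probability Omega R) (X : Omega -> R -> R) (hX : fuzzyRV X).

Lemma Med_of A a : isFc A -> 0 <= a <= 1 ->
  med P (Lo X a) (lA A a) -> med P (Hi X a) (rA A a) ->
  forall u, u = 1 \/ u = -1 -> Med P (fun w => suppf (X w) u a) (suppf A u a).
Proof.
move=> hA ha [l1 l2] [r1 r2] u [->|->].
- split.
  + by rewrite prE; [rewrite lee_fin|exact: meas_le _ _ (mHi X hX _ ha)].
  + by rewrite prE; [rewrite lee_fin|exact: meas_ge _ _ (mHi X hX _ ha)].
- have e1 : [set w | suppf (X w) (-1) a <= suppf A (-1) a] = [set w | lA A a <= Lo X a w].
    by apply/seteqP; split => w /=; rewrite /Lo /lA lerN2.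
  have e2 : [set w | suppf A (-1) a <= suppf (X w) (-1) a] = [set w | Lo X a w <= lA A a].
    by apply/seteqP; split => w /=; rewrite /Lo /lA lerN2.
  split; [rewrite e1|rewrite e2].
  + by rewrite prE; [rewrite lee_fin|exact: meas_ge _ _ (mLo X hX _ ha)].
  + by rewrite prE; [rewrite lee_fin|exact: meas_le _ _ (mLo X hX _ ha)].
Qed.


Lemma Med_s_ne : exists M, Med_s P X M.
Proof.
have key a : 0 <= a <= 1 -> exists l r, l <= r /\
    alevel (Afun P X) a = [set x | l <= x <= r] /\ med P (Lo X a) l /\ med P (Hi X a) r.
  move=> /andP[a0 a1]; case: (ltP 0 a) => a0'.
    by apply: lev_pos => //; rewrite a0'.
  have -> : a = 0 by apply/le_anti; rewrite a0 a0'.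
  exact: lev_zero.
exists (Afun P X); split.
  split; first exact: Afun01.
  by move=> a /key [l [r [lr [hl _]]]]; exists l, r.
move=> u a [hu ha].
have [l [r [lr [hl [ml mr]]]]] := key a ha.
have [s1 s2] := suppf_itv _ _ _ _ hl lr.
have hF : isFc (Afun P X).
  split; first exact: Afun01.
  by move=> b /key [l' [r' [lr' [hl' _]]]]; exists l', r'.
have e1 : lA (Afun P X) a = l by rewrite /lA s2 opprK.
have e2 : rA (Afun P X) a = r by rewrite /rA s1.
by apply: Med_of => //; rewrite ?e1 ?e2.
Qed.

Lemma DFT_ge A : isFc A ->
  ((forall u a, dirlev u a -> Med P (fun w => suppf (X w) u a) (suppf A u a)) <->
   ((1/2)%:E <= D_FT P A X)%E).
Proof.
move=> hA; split.
- move=> H; apply: le_ereal_inf_tmp => e [u [a [h ->]]].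
  by rewrite le_min; have [h1 h2] := H u a h; rewrite h1 h2.
- move=> H u a h.
  have hS : [set e | exists u a, dirlev u a /\
      e = Order.min (P [set w | suppf (X w) u a <= suppf A u a])
                    (P [set w | suppf (X w) u a >= suppf A u a])]
      (Order.min (P [set w | suppf (X w) u a <= suppf A u a])
                 (P [set w | suppf (X w) u a >= suppf A u a])) by exists u, a.
  have := le_trans H (ereal_inf_lbound hS); rewrite le_min => /andP[h1 h2].
  by split.
Qed.

Lemma depth_cmp A U : Med_s P X A -> isFc U -> (D_FT P U X <= D_FT P A X)%E.
Proof.
move=> [hAfc hAmed] hU.
have hA := (DFT_ge _ hAfc).1 hAmed.
case: (leP (D_FT P U X) (1/2)%:E) => hU'; first exact: le_trans hU' hA.
have eq u a : dirlev u a -> suppf U u a = suppf A u a.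
  move=> h; have mS := hX.2 u a h.
  set S := fun w => suppf (X w) u a.
  have hS : [set e | exists u a, dirlev u a /\
      e = Order.min (P [set w | suppf (X w) u a <= suppf U u a])
                    (P [set w | suppf (X w) u a >= suppf U u a])]
      (Order.min (P [set w | suppf (X w) u a <= suppf U u a])
                 (P [set w | suppf (X w) u a >= suppf U u a])) by exists u, a.
  have := lt_le_trans hU' (ereal_inf_lbound hS); rewrite lt_min => /andP[u1 u2].
  have [a1 a2] := hAmed u a h.
  rewrite -/S in u1 u2 a1 a2.
  move: u1 u2 a1 a2.
  rewrite !prE; [|exact: meas_ge|exact: meas_le|exact: meas_ge|exact: meas_le].
  rewrite !lte_fin !lee_fin => u1 u2 a1 a2.
  apply/le_anti/andP; split.
  - rewrite leNgt; apply/negP => lt1.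
    have : pr P [set w | suppf U u a <= S w] <= pr P [set w | suppf A u a < S w].
      apply: pr_le; [exact: meas_ge|exact: meas_gt|].
      by move=> w /= hw; apply: lt_le_trans hw.
    rewrite pr_gt_le //; lra.
  - rewrite leNgt; apply/negP => lt1.
    have : pr P [set w | suppf A u a <= S w] <= pr P [set w | suppf U u a < S w].
      apply: pr_le; [exact: meas_ge|exact: meas_gt|].
      by move=> w /= hw; apply: lt_le_trans hw.
    rewrite pr_gt_le //; lra.
suff -> : D_FT P U X = D_FT P A X by [].
rewrite /D_FT; congr ereal_inf; apply/seteqP; split => e [u [a [h ->]]];
  exists u, a; split => //; by rewrite (eq u a h).
Qed.

End Main.

Theorem theorem4p4 (R : realType) (d : measure_display) (Omega : measurableType d)
  (P : probability Omega R) (X : Omega -> R -> R) :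
  fuzzyRV X -> Med_s P X = Med_DFT P X.
Proof.
move=> hX; apply/seteqP; split => A.
- move=> hA; split; first exact: hA.1.
  by move=> U hU; exact: depth_cmp.
- move=> [hAfc hmax]; split => //.
  have [M hM] := Med_s_ne P X hX.
  apply/(DFT_ge P X _ hAfc).
  apply: le_trans (hmax M hM.1).
  exact: (DFT_ge P X _ hM.1).1 hM.2.
Qed.
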